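(* Let $G$ be a nontrivial finite $p$-group of nilpotency class $c$. In the bar code of the degree-$2$ lower central persistence module of $G$, every interval $[a,b]$ with $a<b$ has $a=1$. Equivalently, for every $2\le k\le c-1$... more precisely, for every $1\le k<l\le c$ the image of $H_2(Q_k,\mathbb F_p)\to H_2(Q_l,\mathbb F_p)$ equals the image of $H_2(G,\mathbb F_p)\to H_2(Q_l,\mathbb F_p)$.
   Context: Lower central series: $L_1(G)=G$, $L_{i+1}(G)=[L_i(G),G]$, so $L_{c+1}(G)=1\ne L_c(G)$. For $k=1,\dots,c$ set $Q_k=G/L_{c+2-k}(G)$ (so $Q_1=G$, $Q_c=G/L_2(G)$). The degree-$n$ lower central persistence module of $G$ is the sequence of $\mathbb F_p$-linear maps $V_1\to V_2\to\cdots\to V_c$ with $V_k=H_n(Q_k,\mathbb F_p)$ and maps induced by the natural surjections $Q_k\to Q_{k+1}$. Such a module decomposes, uniquely up to isomorphism and order, as a direct sum of interval modules $I[a,b]$ ($1\le a\le b\le c$), where $I[a,b]$ has $\mathbb F_p$ in positions $a,\dots,b$, identity maps between consecutive positions in this range, and $0$ elsewhere. The bar code is the multiset of intervals $[a,b]$ occurring in this decomposition. *)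

(* Defs.v *)
From HB Require Import structures.
From mathcomp Require Import all_boot all_order all_algebra all_fingroup all_solvable.
Set Implicit Arguments. Unset Strict Implicit. Unset Printing Implicit Defensive.
Import GRing.Theory.
Local Open Scope ring_scope.

(* Bar-complex chains of a finite group A (a subgroup of the ambient finGroupType T)
   with trivial coefficients in a ring R: an n-chain is a formal R-linear
   combination of n-tuples of elements of A, represented as a finitely supported
   function T^n -> R vanishing outside A^n. *)

Definition is_chain2 (R : ringType) (T : finGroupType) (A : {set T})
  (c : {ffun T * T -> R}) : Prop := forall u, u \notin setX A A -> c u = 0.

Definition is_chain3 (R : ringType) (T : finGroupType) (A : {set T})
  (c : {ffun T * T * T -> R}) : Prop :=
  forall u, u \notin setX (setX A A) A -> c u = 0.

Definition bd2 (R : ringType) (T : finGroupType) (A : {set T})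
  (c : {ffun T * T -> R}) : {ffun T -> R} :=
  [ffun x => \sum_(u in setX A A)
     c u * ((x == u.2)%:R - (x == (u.1 * u.2)%g)%:R + (x == u.1)%:R)].

Definition bd3 (R : ringType) (T : finGroupType) (A : {set T})
  (c : {ffun T * T * T -> R}) : {ffun T * T -> R} :=
  [ffun x => \sum_(u in setX (setX A A) A)
     c u * ((x == (u.1.2, u.2))%:R - (x == ((u.1.1 * u.1.2)%g, u.2))%:R
            + (x == (u.1.1, (u.1.2 * u.2)%g))%:R - (x == (u.1.1, u.1.2))%:R)].

Definition is_cycle2 (R : ringType) (T : finGroupType) (A : {set T})
  (c : {ffun T * T -> R}) : Prop := is_chain2 A c /\ bd2 A c = 0.

Definition is_boundary2 (R : ringType) (T : finGroupType) (A : {set T})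
  (c : {ffun T * T -> R}) : Prop :=
  exists e : {ffun T * T * T -> R}, is_chain3 A e /\ c = bd3 A e.

Definition push2 (R : ringType) (T T' : finGroupType) (f : T -> T')
  (c : {ffun T * T -> R}) : {ffun T' * T' -> R} :=
  [ffun v => \sum_(u | (f u.1, f u.2) == v) c u].

(* im (H_2(A1) -> H_2(B) induced by f1)  is contained in
   im (H_2(A2) -> H_2(B) induced by f2). *)
Definition H2_image_sub (R : ringType) (T1 T2 T3 : finGroupType)
  (A1 : {set T1}) (f1 : T1 -> T3) (A2 : {set T2}) (f2 : T2 -> T3)
  (B : {set T3}) : Prop :=
  forall z, is_cycle2 A1 z ->
    exists w, is_cycle2 A2 w /\
      is_boundary2 B (push2 (R:=R) f1 z - push2 f2 w).

Definition H2_image_eq (R : ringType) (T1 T2 T3 : finGroupType)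
  (A1 : {set T1}) (f1 : T1 -> T3) (A2 : {set T2}) (f2 : T2 -> T3)
  (B : {set T3}) : Prop :=
  H2_image_sub R A1 f1 A2 f2 B /\ H2_image_sub R A2 f2 A1 f1 B.

Definition qmap (gT : finGroupType) (M N : {set gT}) (C : coset_of M)
  : coset_of N := coset N (repr C).

(* Q_k = G / L_{c+2-k}(G), c = nilpotency class *)
Definition Qsub (gT : finGroupType) (G : {group gT}) (k : nat) : {group gT} :=
  'L_((nil_class G).+2 - k)(G)%G.

(* Main.v *)
Require Import Defs.
From HB Require Import structures.
From mathcomp Require Import all_boot all_order all_algebra all_fingroup all_solvable.
Set Implicit Arguments. Unset Strict Implicit. Unset Printing Implicit Defensive.
Import GRing.Theory.
Local Open Scope ring_scope.

Section Lin.
Variable R : ringType.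

Definition sc (T : finType) (r : R) (c : {ffun T -> R}) : {ffun T -> R} :=
  [ffun x => r * c x].
Definition e (T : finType) (x : T) : {ffun T -> R} := [ffun t => (t == x)%:R].

Lemma sc_add (T : finType) r (a b : {ffun T -> R}) : sc r (a + b) = sc r a + sc r b.
Proof. by apply/ffunP=> x; rewrite !ffunE mulrDr. Qed.
Lemma sc_addl (T : finType) r s (a : {ffun T -> R}) : sc (r + s) a = sc r a + sc s a.
Proof. by apply/ffunP=> x; rewrite !ffunE mulrDl. Qed.
Lemma sc_opp (T : finType) r (a : {ffun T -> R}) : sc r (- a) = - sc r a.
Proof. by apply/ffunP=> x; rewrite !ffunE mulrN. Qed.
Lemma sc_oppl (T : finType) r (a : {ffun T -> R}) : sc (- r) a = - sc r a.
Proof. by apply/ffunP=> x; rewrite !ffunE mulNr. Qed.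
Lemma sc_sub (T : finType) r (a b : {ffun T -> R}) : sc r (a - b) = sc r a - sc r b.
Proof. by rewrite sc_add sc_opp. Qed.
Lemma sc0 (T : finType) r : sc r (0 : {ffun T -> R}) = 0.
Proof. by apply/ffunP=> x; rewrite !ffunE mulr0. Qed.
Lemma sc0l (T : finType) (a : {ffun T -> R}) : sc 0 a = 0.
Proof. by apply/ffunP=> x; rewrite !ffunE mul0r. Qed.
Lemma sc1 (T : finType) (a : {ffun T -> R}) : sc 1 a = a.
Proof. by apply/ffunP=> x; rewrite !ffunE mul1r. Qed.
Lemma sc_sum (T : finType) (I : Type) (rr : seq I) (P : pred I) r (F : I -> {ffun T -> R}) :
  sc r (\sum_(i <- rr | P i) F i) = \sum_(i <- rr | P i) sc r (F i).
Proof.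
apply/ffunP=> x; rewrite ffunE !sum_ffunE mulr_sumr.
by apply: eq_bigr => i _; rewrite ffunE.
Qed.
Lemma sc_suml (T : finType) (I : Type) (rr : seq I) (P : pred I) (F : I -> R) (a : {ffun T -> R}) :
  sc (\sum_(i <- rr | P i) F i) a = \sum_(i <- rr | P i) sc (F i) a.
Proof.
apply/ffunP=> x; rewrite ffunE !sum_ffunE mulr_suml.
by apply: eq_bigr => i _; rewrite ffunE.
Qed.
Lemma sc_mul (T : finType) r s (a : {ffun T -> R}) : sc r (sc s a) = sc (r * s) a.
Proof. by apply/ffunP=> x; rewrite !ffunE mulrA. Qed.

Definition lin (T T' : finType) (F : {ffun T -> R} -> {ffun T' -> R}) :=
  forall r a b, F (sc r a + b) = sc r (F a) + F b.

Section LinProps.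
Variables (T T' : finType) (F : {ffun T -> R} -> {ffun T' -> R}) (HF : lin F).
Lemma lin0 : F 0 = 0.
Proof.
have := HF 1 0 0; rewrite !sc1 addr0 => H.
apply/esym; apply: (addrI (F 0)); rewrite addr0; exact: H.
Qed.
Lemma linD a b : F (a + b) = F a + F b.
Proof. by rewrite -{1}(sc1 a) HF sc1. Qed.
Lemma linZ r a : F (sc r a) = sc r (F a).
Proof. by rewrite -(addr0 (sc r a)) HF lin0 addr0. Qed.
Lemma linN a : F (- a) = - F a.
Proof.
have E : forall (U : finType) (b : {ffun U -> R}), - b = sc (-1) b.
  by move=> U b; apply/ffunP=> x; rewrite !ffunE mulN1r.
by rewrite E linZ -E.
Qed.
Lemma linB a b : F (a - b) = F a - F b.
Proof. by rewrite linD linN. Qed.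
Lemma linS (I : Type) (rr : seq I) (P : pred I) (G : I -> {ffun T -> R}) :
  F (\sum_(i <- rr | P i) G i) = \sum_(i <- rr | P i) F (G i).
Proof. exact: (big_morph F linD lin0). Qed.
End LinProps.

Lemma expand (T : finType) (c : {ffun T -> R}) : c = \sum_u sc (c u) (e u).
Proof.
apply/ffunP=> x; rewrite sum_ffunE (bigD1 x) //= big1 ?addr0.
  by rewrite !ffunE eqxx mulr1.
by move=> u ux; rewrite !ffunE eq_sym (negbTE ux) mulr0.
Qed.

Definition push (T T' : finType) (f : T -> T') (c : {ffun T -> R}) : {ffun T' -> R} :=
  [ffun v => \sum_(u | f u == v) c u].

Lemma pushE (T T' : finType) (f : T -> T') c : push f c = \sum_u sc (c u) (e (f u)).
Proof.
apply/ffunP=> v; rewrite ffunE sum_ffunE big_mkcond /=.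
by apply: eq_bigr => u _; rewrite !ffunE eq_sym; case: eqP; rewrite ?mulr1 ?mulr0.
Qed.

Lemma push_lin (T T' : finType) (f : T -> T') : lin (push f).
Proof.
move=> r a b; apply/ffunP=> v; rewrite !ffunE big_distrr -big_split /=.
by apply: eq_bigr => u _; rewrite !ffunE.
Qed.

Lemma push_e (T T' : finType) (f : T -> T') x : push f (e x) = e (f x).
Proof.
rewrite pushE (bigD1 x) //= big1 ?addr0; first by rewrite !ffunE eqxx sc1.
by move=> u ux; rewrite ffunE (negbTE ux) sc0l.
Qed.

Lemma push_comp (T T' T'' : finType) (f : T -> T') (g : T' -> T'') c :
  push g (push f c) = push (g \o f) c.
Proof.
rewrite [push f c]pushE (linS (push_lin g)) pushE.
by apply: eq_bigr => u _; rewrite (linZ (push_lin g)) push_e.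
Qed.

End Lin.

Section Chains.
Variables (R : ringType) (T : finGroupType).

Lemma bd2E (A : {set T}) (c : {ffun T * T -> R}) :
  bd2 A c = \sum_(u in setX A A) sc (c u) (e R u.2 - e R (u.1 * u.2)%g + e R u.1).
Proof.
apply/ffunP=> x; rewrite ffunE sum_ffunE; apply: eq_bigr => u _.
by rewrite !ffunE.
Qed.

Lemma bd3E (A : {set T}) (c : {ffun T * T * T -> R}) :
  bd3 A c = \sum_(u in setX (setX A A) A) sc (c u)
     (e R (u.1.2, u.2) - e R ((u.1.1 * u.1.2)%g, u.2)
      + e R (u.1.1, (u.1.2 * u.2)%g) - e R (u.1.1, u.1.2)).
Proof.
apply/ffunP=> x; rewrite ffunE sum_ffunE; apply: eq_bigr => u _.
by rewrite !ffunE.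
Qed.

Lemma bd2_lin (A : {set T}) : lin (@bd2 R T A).
Proof.
move=> r a b; rewrite !bd2E sc_sum -big_split /=; apply: eq_bigr => u _.
by rewrite !ffunE sc_addl sc_mul.
Qed.

Lemma bd3_lin (A : {set T}) : lin (@bd3 R T A).
Proof.
move=> r a b; rewrite !bd3E sc_sum -big_split /=; apply: eq_bigr => u _.
by rewrite !ffunE sc_addl sc_mul.
Qed.

Lemma bd2_e (A : {set T}) (x y : T) : x \in A -> y \in A ->
  bd2 A (e R (x, y)) = e R y - e R (x * y)%g + e R x.
Proof.
move=> xA yA; rewrite bd2E (bigD1 (x, y)) /=; last by rewrite !inE xA yA.
rewrite big1 ?addr0; first by rewrite ffunE eqxx sc1.
by move=> u /andP[_ ux]; rewrite ffunE (negbTE ux) sc0l.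
Qed.

Lemma bd3_e (A : {set T}) (x y z : T) : x \in A -> y \in A -> z \in A ->
  bd3 A (e R (x, y, z)) =
     e R (y, z) - e R ((x * y)%g, z) + e R (x, (y * z)%g) - e R (x, y).
Proof.
move=> xA yA zA; rewrite bd3E (bigD1 (x, y, z)) /=; last by rewrite !inE xA yA zA.
rewrite big1 ?addr0; first by rewrite ffunE eqxx sc1.
by move=> u /andP[_ ux]; rewrite ffunE (negbTE ux) sc0l.
Qed.

Lemma bnd0 (A : {set T}) : is_boundary2 A (0 : {ffun T * T -> R}).
Proof. by exists 0; split; [move=> u _; rewrite ffunE | rewrite (lin0 (bd3_lin A))]. Qed.

Lemma bndD (A : {set T}) (a b : {ffun T * T -> R}) :
  is_boundary2 A a -> is_boundary2 A b -> is_boundary2 A (a + b).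
Proof.
move=> [ea [ca ->]] [eb [cb ->]]; exists (ea + eb); split.
  by move=> u uA; rewrite ffunE ca ?cb ?addr0.
by rewrite (linD (bd3_lin A)).
Qed.

Lemma bndZ (A : {set T}) r (a : {ffun T * T -> R}) : is_boundary2 A a -> is_boundary2 A (sc r a).
Proof.
move=> [ea [ca ->]]; exists (sc r ea); split.
  by move=> u uA; rewrite ffunE ca ?mulr0.
by rewrite (linZ (bd3_lin A)).
Qed.

Lemma bndN (A : {set T}) (a : {ffun T * T -> R}) : is_boundary2 A a -> is_boundary2 A (- a).
Proof.
move=> [ea [ca ->]]; exists (- ea); split.
  by move=> u uA; rewrite ffunE ca ?oppr0.
by rewrite (linN (bd3_lin A)).
Qed.

Lemma bndB (A : {set T}) (a b : {ffun T * T -> R}) :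
  is_boundary2 A a -> is_boundary2 A b -> is_boundary2 A (a - b).
Proof. by move=> ha hb; apply: bndD => //; apply: bndN. Qed.

Lemma bndS (A : {set T}) (I : Type) (rr : seq I) (P : pred I) (F : I -> {ffun T * T -> R}) :
  (forall i, P i -> is_boundary2 A (F i)) -> is_boundary2 A (\sum_(i <- rr | P i) F i).
Proof.
move=> H; elim/big_rec: _ => [|i x Pi hx]; first exact: bnd0.
by apply: bndD => //; apply: H.
Qed.

Lemma bnd_e3 (A : {set T}) (x y z : T) : x \in A -> y \in A -> z \in A ->
  is_boundary2 A (bd3 A (e R (x, y, z))).
Proof.
move=> xA yA zA; exists (e R (x, y, z)); split => //.
move=> u uA; rewrite ffunE; case: eqP => // eu; move: uA; rewrite eu !inE xA yA zA //.
Qed.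

Lemma ch0 (A : {set T}) : is_chain2 A (0 : {ffun T * T -> R}).
Proof. by move=> u _; rewrite ffunE. Qed.
Lemma chD (A : {set T}) (a b : {ffun T * T -> R}) : is_chain2 A a -> is_chain2 A b -> is_chain2 A (a + b).
Proof. by move=> ha hb u uA; rewrite ffunE ha ?hb ?addr0. Qed.
Lemma chN (A : {set T}) (a : {ffun T * T -> R}) : is_chain2 A a -> is_chain2 A (- a).
Proof. by move=> ha u uA; rewrite ffunE ha ?oppr0. Qed.
Lemma chB (A : {set T}) (a b : {ffun T * T -> R}) : is_chain2 A a -> is_chain2 A b -> is_chain2 A (a - b).
Proof. by move=> ha hb; apply: chD => //; apply: chN. Qed.
Lemma chZ (A : {set T}) r (a : {ffun T * T -> R}) : is_chain2 A a -> is_chain2 A (sc r a).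
Proof. by move=> ha u uA; rewrite ffunE ha ?mulr0. Qed.
Lemma chS (A : {set T}) (I : Type) (rr : seq I) (P : pred I) (F : I -> {ffun T * T -> R}) :
  (forall i, P i -> is_chain2 A (F i)) -> is_chain2 A (\sum_(i <- rr | P i) F i).
Proof.
move=> H; elim/big_rec: _ => [|i x Pi hx]; first exact: ch0.
by apply: chD => //; apply: H.
Qed.
Lemma ch_e (A : {set T}) (x y : T) : x \in A -> y \in A -> is_chain2 A (e R (x, y)).
Proof.
move=> xA yA u uA; rewrite ffunE; case: eqP => // eu; move: uA; rewrite eu !inE xA yA //.
Qed.

End Chains.
Inductive zex := ZAt of nat | ZPl of zex & zex | ZNg of zex | ZZr.
Section Zrefl.
Variable V : zmodType.
Fixpoint zev (s : seq V) e := match e with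
  | ZAt i => nth 0 s i | ZPl a b => zev s a + zev s b | ZNg a => - zev s a | ZZr => 0 end.
Fixpoint zco (e : zex) (i : nat) : int := match e with
  | ZAt j => (i == j)%:Z | ZPl a b => zco a i + zco b i | ZNg a => - zco a i | ZZr => 0 end.
Lemma zevE s e : zev s e = \sum_(i < size s) nth 0 s i *~ zco e i.
Proof.
elim: e => [j|a IHa b IHb|a IHa|] /=.
- case: (ltnP j (size s)) => js.
    rewrite (bigD1 (Ordinal js)) //= eqxx mulr1z big1 ?addr0 // => i ij.
    have -> : (i == j :> nat) = false by apply/negbTE; move: ij; apply: contra => /eqP ij; apply/eqP/val_inj.
    by rewrite mulr0z.
  rewrite nth_default // big1 // => i _.
  have -> : (i == j :> nat) = false by apply/negbTE; rewrite neq_ltn (leq_trans (ltn_ord i) js).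
  by rewrite mulr0z.
- by rewrite IHa IHb -big_split /=; apply: eq_bigr => i _; rewrite mulrzDr.
- by rewrite IHa -sumrN; apply: eq_bigr => i _; rewrite mulrNz.
- by rewrite big1 // => i _; rewrite mulr0z.
Qed.
Lemma zev_eq s e1 e2 : all (fun i => zco e1 i == zco e2 i) (iota 0 (size s)) ->
  zev s e1 = zev s e2.
Proof.
move=> /allP H; rewrite !zevE; apply: eq_bigr => i _.
by rewrite (eqP (H i _)) // mem_iota /= add0n.
Qed.
End Zrefl.

Ltac zidx s t := match s with
 | (?h :: _) => let _ := match goal with _ => unify h t end in constr:(0%N)
 | (_ :: ?s') => let i := zidx s' t in constr:(i.+1)
end.
Ltac zreify s t := lazymatch t with
 | (?a + ?b)%R => let x := zreify s a in let y := zreify s b in constr:(ZPl x y)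
 | (- ?a)%R => let x := zreify s a in constr:(ZNg x)
 | 0%R => constr:(ZZr)
 | _ => let i := zidx s t in constr:(ZAt i)
end.
Ltac zmod_id s := lazymatch goal with
 | |- ?l = ?r =>
   let x := zreify s l in let y := zreify s r in
   change (zev s x = zev s y); apply: zev_eq; vm_compute; reflexivity
end.


Section Push.
Variables (R : ringType) (T T' : finGroupType).

Lemma push2E (f : T -> T') (c : {ffun T * T -> R}) :
  push2 f c = push (fun u => (f u.1, f u.2)) c.
Proof. by []. Qed.

Lemma chain_expand (A : {set T}) (c : {ffun T * T -> R}) :
  is_chain2 A c -> c = \sum_(u in setX A A) sc (c u) (e R u).
Proof.
move=> cA; rewrite {1}[c]expand (bigID (mem (setX A A))) /= addrC big1 ?add0r //.
by move=> u uA; rewrite cA ?sc0l.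
Qed.

Lemma sum_restrict (A : {set T}) (c : {ffun T * T -> R}) (F : T * T -> {ffun T' * T' -> R}) :
  is_chain2 A c -> \sum_u sc (c u) (F u) = \sum_(u in setX A A) sc (c u) (F u).
Proof.
move=> cA; rewrite (bigID (mem (setX A A))) /= addrC big1 ?add0r //.
by move=> u uA; rewrite cA ?sc0l.
Qed.

Lemma sum_restrict1 (A : {set T}) (c : {ffun T * T -> R}) (F : T * T -> {ffun T' -> R}) :
  is_chain2 A c -> \sum_u sc (c u) (F u) = \sum_(u in setX A A) sc (c u) (F u).
Proof.
move=> cA; rewrite (bigID (mem (setX A A))) /= addrC big1 ?add0r //.
by move=> u uA; rewrite cA ?sc0l.
Qed.

Lemma ch_push (A : {set T}) (B : {set T'}) (f : T -> T') (w : {ffun T * T -> R}) :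
  is_chain2 A w -> {in A, forall x, f x \in B} -> is_chain2 B (push2 f w).
Proof.
move=> wA fAB; rewrite push2E pushE (sum_restrict _ wA).
apply: chS => u; rewrite inE => /andP[u1 u2]; apply: chZ; apply: ch_e; exact: fAB.
Qed.

Lemma push_on (A : {set T}) (f g : T -> T') (w : {ffun T * T -> R}) :
  is_chain2 A w -> {in A, f =1 g} -> push2 f w = push2 g w.
Proof.
move=> wA fg; rewrite !push2E !pushE !(sum_restrict _ wA).
apply: eq_bigr => u; rewrite inE => /andP[u1 u2]; by rewrite !fg.
Qed.

Lemma bd_push (A : {set T}) (B : {set T'}) (f : T -> T') (w : {ffun T * T -> R}) :
  is_chain2 A w -> {in A &, {morph f : x y / (x * y)%g}} -> {in A, forall x, f x \in B} ->
  bd2 B (push2 f w) = push f (bd2 A w).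
Proof.
move=> wA fM fAB; rewrite push2E pushE (linS (bd2_lin B)).
under eq_bigr => u _ do rewrite (linZ (bd2_lin B)).
rewrite (sum_restrict1 (fun u => bd2 B (e R (f u.1, f u.2))) wA).
rewrite bd2E (linS (push_lin f)); apply: eq_bigr => u; rewrite inE => /andP[u1 u2].
rewrite (linZ (push_lin f)) bd2_e ?fAB //.
by rewrite !(linD (push_lin f)) !(linN (push_lin f)) !push_e fM.
Qed.

End Push.

Section Main.
Variables (R : ringType) (gT : finGroupType) (G N N' : {group gT}).
Hypotheses (nNG : (N <| G)%g) (nN'G : (N' <| G)%g) (sNN' : N \subset N')
  (sNc : N \subset [~: N', G]%g).

Local Notation H := (G / N)%g.
Local Notation K := (G / N')%g.
Local Notation rho := (@qmap gT N N').
Local Notation sig := (coset N').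

Lemma GnN x : x \in G -> x \in 'N(N)%g.
Proof. by move=> xG; apply: (subsetP (normal_norm nNG)). Qed.
Lemma GnN' x : x \in G -> x \in 'N(N')%g.
Proof. by move=> xG; apply: (subsetP (normal_norm nN'G)). Qed.
Lemma N'G : N' \subset G.
Proof. by case/andP: nN'G. Qed.
Lemma NG : N \subset G.
Proof. by case/andP: nNG. Qed.

Lemma reprG (a : coset_of N) : a \in H -> repr a \in G.
Proof.
move=> aH; rewrite -(quotientGK nNG); apply: mem_morphpre; first exact: repr_coset_norm.
by rewrite /= coset_reprK.
Qed.

Lemma rhoK (a : coset_of N) : a \in H -> rho a \in K.
Proof. by move=> aH; apply: mem_quotient; apply: reprG. Qed.

Lemma rho_coset x : x \in G -> rho (coset N x) = sig x.
Proof.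
move=> xG; rewrite /qmap.
set r := repr _.
have rN : r \in 'N(N)%g by apply: repr_coset_norm.
have rG : r \in G by apply: reprG; apply: mem_quotient.
have xrN : (x^-1 * r)%g \in N.
  apply: coset_idr; first by rewrite groupM ?groupV ?GnN.
  by rewrite morphM ?morphV ?groupV ?GnN //= /r coset_reprK mulVg.
have xrN' : (x^-1 * r)%g \in N' by apply: (subsetP sNN').
have -> : r = (x * (x^-1 * r))%g by rewrite mulVKg.
rewrite morphM ?GnN' ?groupM ?groupV //=.
by rewrite (coset_id xrN') mulg1.
Qed.

Lemma sub2 : H2_image_sub R G sig H rho K.
Proof.
move=> w [wG wc]; exists (push2 (coset N) w).
have fM : {in G &, {morph coset N : x y / (x * y)%g}}.
  by move=> x y xG yG; rewrite morphM ?GnN.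
have fAB : {in G, forall x, coset N x \in H} by move=> x xG; apply: mem_quotient.
split; first split.
- exact: ch_push wG fAB.
- by rewrite (bd_push wG fM fAB) wc (lin0 (push_lin _)).
have -> : push2 rho (push2 (coset N) w) = push2 (fun x => rho (coset N x)) w.
  by rewrite !push2E push_comp.
rewrite (push_on wG (g := sig)) ?subrr; first exact: bnd0.
exact: rho_coset.
Qed.

Definition inS (c : {ffun gT -> R}) : Prop :=
  exists v, is_chain2 G v /\ bd2 G v = c /\ is_boundary2 K (push2 sig v).
Definition fe (x : gT) : {ffun gT -> R} := e R x - e R 1%g.

Lemma S0 : inS 0.
Proof.
exists 0; split; first exact: ch0.
by rewrite (lin0 (bd2_lin G)) push2E (lin0 (push_lin _)); split => //; apply: bnd0.
Qed.

Lemma SD a b : inS a -> inS b -> inS (a + b).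
Proof.
move=> [va [ca [da ba]]] [vb [cb [db bb]]]; exists (va + vb); split; first exact: chD.
by rewrite (linD (bd2_lin G)) da db push2E (linD (push_lin _)); split => //; apply: bndD.
Qed.

Lemma SN a : inS a -> inS (- a).
Proof.
move=> [va [ca [da ba]]]; exists (- va); split; first exact: chN.
by rewrite (linN (bd2_lin G)) da push2E (linN (push_lin _)); split => //; apply: bndN.
Qed.

Lemma SB a b : inS a -> inS b -> inS (a - b).
Proof. by move=> ha hb; apply: SD => //; apply: SN. Qed.

Lemma SZ r a : inS a -> inS (sc r a).
Proof.
move=> [va [ca [da ba]]]; exists (sc r va); split; first exact: chZ.
by rewrite (linZ (bd2_lin G)) da push2E (linZ (push_lin _)); split => //; apply: bndZ.
Qed.

Lemma SS (I : Type) (rr : seq I) (P : pred I) (F : I -> {ffun gT -> R}) :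
  (forall i, P i -> inS (F i)) -> inS (\sum_(i <- rr | P i) F i).
Proof.
move=> HF; elim/big_rec: _ => [|i x Pi hx]; first exact: S0.
by apply: SD => //; apply: HF.
Qed.

Lemma Smul x y : x \in N' -> y \in N' -> inS (fe x + fe y - fe (x * y)%g).
Proof.
move=> xN yN; have xG := subsetP N'G x xN; have yG := subsetP N'G y yN.
exists (e R (x, y) - e R (1%g, 1%g)); split; first by apply: chB; apply: ch_e.
rewrite (linB (bd2_lin G)) !bd2_e // mul1g; split.
  by rewrite /fe; zmod_id [:: e R x; e R y; e R (x * y)%g; e R 1%g].
rewrite push2E (linB (push_lin _)) !push_e /= !coset_id // subrr; exact: bnd0.
Qed.

Lemma Sconj y g : y \in N' -> g \in G -> inS (fe y - fe (y ^ g)%g).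
Proof.
move=> yN gG; have yG := subsetP N'G y yN.
exists (e R (g^-1, y * g)%g + e R (y, g) - e R (g^-1, g)%g - e R (1%g, 1%g)); split.
  by apply: chB; [apply: chB; [apply: chD|]|]; apply: ch_e; rewrite ?groupV ?groupM.
rewrite !(linB (bd2_lin G)) (linD (bd2_lin G)) !bd2_e ?groupV ?groupM // mul1g mulVg.
rewrite -conjgE; split.
  by rewrite /fe; zmod_id [:: e R (y * g)%g; e R (y ^ g)%g; e R g^-1%g; e R g; e R y; e R 1%g].
rewrite push2E !(linB (push_lin _)) (linD (push_lin _)) !push_e /=.
rewrite morphM ?GnN' // ?(subsetP N'G) //= (coset_id yN) (coset_id (group1 N')) mul1g.
have -> : e R (sig g^-1, sig g) + e R (1%g, sig g) - e R (sig g^-1, sig g) - e R (1%g, 1%g)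
   = bd3 K (e R (1%g, 1%g, sig g)).
  rewrite bd3_e ?mem_quotient ?group1 // !mul1g.
  by zmod_id [:: e R (sig g^-1, sig g); e R (1%g, sig g); e R (1%g, 1%g)].
by apply: bnd_e3; rewrite ?group1 ?mem_quotient.
Qed.

Lemma S_comm n : n \in [~: N', G]%g -> inS (fe n).
Proof.
move=> /gen_prodgP [k [c Hc ->]].
pose P (x : gT) := x \in N' /\ inS (fe x).
suff : P (\prod_i c i)%g by case.
apply: (big_ind P).
- by split; [apply: group1 | rewrite /fe subrr; apply: S0].
- move=> x y [xN Sx] [yN Sy]; split; first by rewrite groupM.
  have -> : fe (x * y)%g = (fe x + fe y) - (fe x + fe y - fe (x * y)%g).
    by rewrite /fe; zmod_id [:: e R x; e R y; e R (x * y)%g; e R 1%g].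
  by apply: SB; [apply: SD | apply: Smul].
move=> i _; case/imset2P: (Hc i) => y g yN gG ->.
have ygN : (y ^ g)%g \in N' by rewrite memJ_norm ?GnN'.
have yiN : (y^-1)%g \in N' by rewrite groupV.
rewrite commgEl; split; first by rewrite groupM.
have h1 := Smul yiN ygN; have h2 := Smul yiN yN; have h3 := Sconj yN gG.
rewrite mulVg in h2.
have -> : fe (y^-1 * y ^ g)%g =
   - (fe y^-1 + fe (y ^ g) - fe (y^-1 * y ^ g)) + (fe y^-1 + fe y - fe 1) - (fe y - fe (y ^ g)).
  rewrite /fe; zmod_id [:: e R (y^-1 * y ^ g)%g; e R y^-1%g; e R (y ^ g)%g; e R y; e R 1%g].
by apply: SB => //; apply: SD => //; apply: SN.
Qed.

Lemma sum_sc_sub (I : finType) (P : pred I) (k : I -> R) (a b : I -> {ffun coset_of N' * coset_of N' -> R}) :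
  \sum_(u in P) sc (k u) (a u - b u) = \sum_(u in P) sc (k u) (a u) - \sum_(u in P) sc (k u) (b u).
Proof. by rewrite -sumrB; apply: eq_bigr => u _; rewrite sc_sub. Qed.

Lemma sub1 : H2_image_sub R H rho G sig K.
Proof.
move=> z [zH zc].
pose P := setX H H.
pose s := fun a : coset_of N => repr a.
pose nn := fun u : coset_of N * coset_of N => ((repr (u.1 * u.2))^-1 * (repr u.1 * repr u.2))%g.
have mem1 : forall u, u \in P -> [/\ u.1 \in H, u.2 \in H & (u.1 * u.2)%g \in H].
  by move=> u; rewrite inE => /andP[u1 u2]; split => //; rewrite groupM.
have memN : forall u, u \in P -> nn u \in N.
  move=> u /mem1 [u1 u2 u12]; rewrite /nn; apply: coset_idr.
    by rewrite !groupM ?groupV ?repr_coset_norm.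
  rewrite morphM ?morphV ?groupM ?groupV ?repr_coset_norm //= morphM ?repr_coset_norm //= !coset_reprK; move: (coset_reprK (u.1 * u.2)%g) => /= ->; exact: mulVg.
have memG : forall u, u \in P -> [/\ repr u.1 \in G, repr u.2 \in G,
    repr (u.1 * u.2)%g \in G & nn u \in G].
  move=> u uP; have [u1 u2 u12] := mem1 u uP.
  by split; rewrite ?reprG //; apply: (subsetP NG); apply: memN.
have X1 : \sum_(u in P) sc (z u) (e R (repr u.2) - e R (repr (u.1 * u.2)%g) + e R (repr u.1)) = 0.
  transitivity (push s (bd2 H z)); last by rewrite zc (lin0 (push_lin _)).
  rewrite bd2E (linS (push_lin _)); apply: eq_bigr => u _.
  by rewrite (linZ (push_lin _)) !(linD (push_lin _)) (linN (push_lin _)) !push_e.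
have X2 : \sum_(u in P) z u = 0.
  have E : push (fun _ : coset_of N => tt) (bd2 H z) = sc (\sum_(u in P) z u) (e R tt).
    rewrite bd2E (linS (push_lin _)) sc_suml; apply: eq_bigr => u _.
    rewrite (linZ (push_lin _)) !(linD (push_lin _)) (linN (push_lin _)) !push_e.
    by rewrite subrr add0r.
  move: E; rewrite zc (lin0 (push_lin _)) => /(congr1 (fun c : {ffun unit -> R} => c tt)).
  by rewrite !ffunE eqxx mulr1 => <-.
pose zt := \sum_(u in P) sc (z u) (e R (repr u.1, repr u.2) - e R (repr (u.1 * u.2)%g, nn u)).
pose c := \sum_(u in P) sc (z u) (e R (nn u)).
have Hzt : bd2 G zt = - c.
  transitivity (\sum_(u in P) sc (z u) (e R (repr u.2) - e R (repr (u.1 * u.2)%g) + e R (repr u.1)) - c);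
    last by rewrite X1 sub0r.
  rewrite /c -sumrB (linS (bd2_lin G)); apply: eq_bigr => u uP.
  have [g1 g2 g12 gn] := memG u uP.
  rewrite (linZ (bd2_lin G)) (linB (bd2_lin G)) !bd2_e // mulVKg -sc_sub.
  congr sc.
  by zmod_id [:: e R (repr u.2); e R (repr u.1 * repr u.2)%g; e R (repr u.1);
                 e R (nn u); e R (repr (u.1 * u.2)%g)].
have Sc : inS c.
  have E : \sum_(u in P) sc (z u) (fe (nn u)) = c - sc (\sum_(u in P) z u) (e R 1%g).
    by rewrite sc_suml -sumrB; apply: eq_bigr => u _; rewrite /fe sc_sub.
  rewrite X2 sc0l subr0 in E; rewrite -E.
  apply: SS => u uP; apply: SZ; apply: S_comm; apply: (subsetP sNc); exact: memN.
have [v [vG [dv bv]]] := Sc.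
exists (zt + v); split.
  split; last by rewrite (linD (bd2_lin G)) Hzt dv addNr.
  apply: chD => //; apply: chS => u uP; have [g1 g2 g12 gn] := memG u uP.
  by apply: chZ; apply: chB; apply: ch_e.
have Ez : push2 rho z = \sum_(u in P) sc (z u) (e R (rho u.1, rho u.2)).
  by rewrite push2E pushE (sum_restrict _ zH).
have Et : push2 sig zt = \sum_(u in P) sc (z u) (e R (rho u.1, rho u.2) - e R (rho (u.1 * u.2)%g, 1%g)).
  rewrite push2E (linS (push_lin _)); apply: eq_bigr => u uP.
  by rewrite (linZ (push_lin _)) (linB (push_lin _)) !push_e /= (coset_id (subsetP sNN' _ (memN u uP))).
have Ep : push2 sig (zt + v) = push2 sig zt + push2 sig v by rewrite !push2E (linD (push_lin _)).
have -> : push2 rho z - push2 sig (zt + v) =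
   \sum_(u in P) sc (z u) (e R (rho (u.1 * u.2)%g, 1%g) - e R (1%g, 1%g)) - push2 sig v.
  rewrite Ep Ez Et !sum_sc_sub -sc_suml X2 sc0l subr0.
  zmod_id [:: \sum_(u in P) sc (z u) (e R (rho u.1, rho u.2));
              \sum_(u in P) sc (z u) (e R (rho (u.1 * u.2)%g, 1%g)); push2 sig v].
apply: bndB => //; apply: bndS => u uP; apply: bndZ.
have [u1 u2 u12] := mem1 u uP.
have xK := rhoK u12.
have -> : e R (rho (u.1 * u.2)%g, 1%g) - e R (1%g, 1%g) = - bd3 K (e R (rho (u.1 * u.2)%g, 1%g, 1%g)).
  rewrite bd3_e ?group1 // mulg1 mul1g.
  by zmod_id [:: e R (rho (u.1 * u.2)%g, 1%g); e R (1 : coset_of N', 1 : coset_of N')%g].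
by apply: bndN; apply: bnd_e3; rewrite ?group1.
Qed.

End Main.

From Stdlib Require Import Lia.
Local Close Scope ring_scope.

Theorem proposition3 (p : nat) (gT : finGroupType) (G : {group gT}) :
  prime p -> (pgroup p G) -> G :!=: 1%g ->
  forall k l : nat, 1 <= k -> k < l -> l <= nil_class G ->
    H2_image_eq 'F_p
      (G / Qsub G k)%g (@qmap gT (Qsub G k) (Qsub G l))
      G (coset (Qsub G l))
      (G / Qsub G l)%g.
Proof.
move=> pr pG ntG k l k1 kl lc.
set c := nil_class G in lc *.
have nNG : (Qsub G k <| G)%g by apply: lcn_normal.
have nN'G : (Qsub G l <| G)%g by apply: lcn_normal.
have sNN' : Qsub G k \subset Qsub G l.
  apply: lcn_sub_leq; rewrite -!minusE; apply/leP; move/leP: kl; lia.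
have sNc : Qsub G k \subset [~: Qsub G l, G]%g.
  rewrite /Qsub -/c.
  have -> : (c.+2 - k = (c - k).+2)%N.
    have kc : k <= c by apply: ltnW (leq_trans kl lc).
    by rewrite !subSn // ltnW.
  rewrite /= lcnSn; apply: commgSS => //; apply: lcn_sub_leq.
  rewrite -!minusE; apply/leP; move/leP: kl; move/leP: lc; lia.
split; [exact: sub1 | exact: sub2].
Qed.
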